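(* Let $(\mathsf K,\mathsf D)$ be a differential ring, $n\ge1$, $L=\sum_{i=0}^n\binom{n}{i}a_i\mathsf D^{n-i}\in\mathsf K\langle\mathsf D\rangle$ with $a_0=1$, and $f\in\mathsf K^\times$. Put $u:=f^{-1}\mathsf D(f)$ and write $$f^{-1}Lf=\sum_{k=0}^n\binom nk\tilde a_k\mathsf D^{n-k}.$$ Then for each $k=0,1,\dots,n$, $$\tilde a_k=\sum_{j=0}^k\binom kj\,(f^{-1}a_{k-j}f)\,P_j(u).$$
   Context: $(\mathsf K,\mathsf D)$: unital associative ring with derivation; $\mathsf K\langle\mathsf D\rangle$: Ore algebra, coefficients on the left, $\mathsf D a=a\mathsf D+\mathsf D(a)$. For $u\in\mathsf K$ the noncommutative Bell polynomials $P_m(u)\in\mathsf K$ are defined by $P_0(u)=1$, $P_{m+1}(u)=\mathsf D(P_m(u))+u\,P_m(u)$. *)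

(* Defs.v *)
From HB Require Import structures.
From mathcomp Require Import all_boot all_order all_algebra.
Set Implicit Arguments. Unset Strict Implicit. Unset Printing Implicit Defensive.
Import GRing.Theory.
Local Open Scope ring_scope.

(* The Ore algebra K<D> is represented on the carrier {poly K}: the operator
   sum_i p_i D^i (coefficients on the left) is the polynomial with coefficients
   p`_i.  Only the additive structure and left scaling c *: p (coefficientwise
   left multiplication by c) of {poly K} are used; the product of K<D> is
   [oremul D] below, NOT the polynomial product. *)

(* left multiplication by D:  D * (sum_i p_i D^i) = sum_i (p_i D^(i+1) + D(p_i) D^i),
   which is the rule  D a = a D + D(a). *)
Definition Dmul (K : nzRingType) (D : K -> K) (p : {poly K}) : {poly K} :=
  'X * p + map_poly D p.

Definition oremul (K : nzRingType) (D : K -> K) (p q : {poly K}) : {poly K} :=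
  \sum_(i < size p) p`_i *: iter i (Dmul D) q.

Fixpoint bellP (K : nzRingType) (D : K -> K) (m : nat) (u : K) : K :=
  match m with
  | 0 => 1
  | m'.+1 => D (bellP D m' u) + u * bellP D m' u
  end.

(* Main.v *)
Require Import Defs.
From HB Require Import structures.
From mathcomp Require Import all_boot all_order all_algebra ring zify.
Import GRing.Theory.
Local Open Scope ring_scope.

Lemma D0 (K : nzRingType) (D : K -> K) (D_add : forall x y, D (x + y) = D x + D y) : D 0 = 0.
Proof. by apply: (addrI (D 0)); rewrite -D_add !addr0. Qed.

Lemma D1 (K : nzRingType) (D : K -> K) (D_add : forall x y, D (x + y) = D x + D y)
  (D_mul : forall x y, D (x * y) = D x * y + x * D y) : D 1 = 0.
Proof. have := D_mul 1 1; rewrite !mulr1 mul1r => H. by apply: (addrI (D 1)); rewrite addr0 -H. Qed.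

Lemma Dnat (K : nzRingType) (D : K -> K) (D_add : forall x y, D (x + y) = D x + D y) x n :
  D (x *+ n) = D x *+ n.
Proof. elim: n => [|n IH]; first by rewrite !mulr0n D0. by rewrite !mulrS D_add IH. Qed.

Lemma coef_Dmul (K : nzRingType) (D : K -> K) (D_add : forall x y, D (x + y) = D x + D y) p i :
  (Dmul D p)`_i = (if (i == 0)%N then 0 else p`_i.-1) + D p`_i.
Proof. by rewrite /Dmul coefD coefXM coef_map_id0 // D0. Qed.

Lemma iterDmulC (K : nzRingType) (D : K -> K) (D_add : forall x y, D (x + y) = D x + D y) m g i :
  (iter m (Dmul D) g%:P)`_i = if (i <= m)%N then 'C(m, i)%:R * iter (m - i) D g else 0.
Proof.
elim: m i => [|m IH] i.
  by case: i => [|i]; rewrite /= coefC /= ?bin0 ?mul1r.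
rewrite iterS coef_Dmul //; case: i => [|i] /=.
  by rewrite IH /= ?bin0 ?mul1r ?subn0 add0r.
rewrite !IH ltnS; case: (ltngtP i m) => Him.
- rewrite binS natrD mulrDl addrC; congr (_ + _).
  + by rewrite !mulr_natl Dnat // subSS -(subnSK Him).
- by rewrite (@D0 _ _ D_add) add0r.
- by rewrite Him (@D0 _ _ D_add) addr0 !binn ?subSS ?subnn.
Qed.

Lemma rev_poly (K : nzRingType) n (c : nat -> K) :
  \sum_(i < n.+1) c i *: 'X^(n - i) = \poly_(j < n.+1) c (n - j)%N.
Proof.
rewrite poly_def (reindex_inj rev_ord_inj) /=; apply: eq_bigr => i _.
by rewrite subKn // -ltnS.
Qed.

Lemma widen_sum (K : nzRingType) (p : {poly K}) N (F : nat -> {poly K}) :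
  (size p <= N)%N -> \sum_(i < size p) p`_i *: F i = \sum_(i < N) p`_i *: F i.
Proof.
move=> H; rewrite (big_ord_widen _ (fun i => p`_i *: F i) H) big_mkcond /=.
apply: eq_bigr => i _; case: ifP => // /negbT; rewrite -leqNgt => H2.
by rewrite nth_default // scale0r.
Qed.

Lemma binid m k t : (t <= k)%N ->
  ('C(m + k, k - t) * 'C(m + t, m) = 'C(k, t) * 'C(m + k, k))%N.
Proof.
move=> Htk.
have Q0 : (0 < (k - t)`! * t`! * m`! * (m + t)`!)%N by rewrite !muln_gt0 !fact_gt0.
apply/eqP; rewrite -(eqn_pmul2r Q0); apply/eqP.
have h1 := bin_fact (leq_trans (leq_subr t k) (leq_addl m k)).
have e1 : (m + k - (k - t) = m + t)%N by lia.
rewrite e1 in h1.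
have h2 := bin_fact (leq_addr t m). rewrite addKn in h2.
have h3 := bin_fact Htk.
have h4 := bin_fact (leq_addl m k). rewrite addnK in h4.
transitivity (('C(m + k, k - t) * ((k - t)`! * (m + t)`!)) * ('C(m + t, m) * (m`! * t`!)))%N.
  ring.
rewrite h1 h2.
transitivity (('C(m + k, k) * (('C(k, t) * (t`! * (k - t)`!)) * m`!)) * (m + t)`!)%N.
  2: ring.
by rewrite h3 h4.
Qed.

Lemma bellE (K : unitRingType) (D : K -> K)
  (D_add : forall x y, D (x + y) = D x + D y)
  (D_mul : forall x y, D (x * y) = D x * y + x * D y)
  (f : K) (Hf : f \is a GRing.unit) j :
  bellP D j (f^-1 * D f) = f^-1 * iter j D f.
Proof.
have Dinv : D f^-1 = - (f^-1 * D f * f^-1).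
  rewrite -[D f^-1](mulrK Hf).
  have H : D f^-1 * f = - (f^-1 * D f).
    by apply/eqP; rewrite -addr_eq0 -D_mul mulVr // (@D1 _ _ D_add D_mul).
  by rewrite H mulNr.
elim: j => [|j IH] /=; first by rewrite mulVr.
rewrite IH D_mul Dinv !mulrA mulNr addrC addrA.
by rewrite subrr add0r.
Qed.

Theorem mainTheorem3 (K : unitRingType) (D : K -> K)
  (D_add : forall x y, D (x + y) = D x + D y)
  (D_mul : forall x y, D (x * y) = D x * y + x * D y)
  (n : nat) (Hn : (1 <= n)%N) (a : nat -> K) (Ha0 : a 0%N = 1)
  (f : K) (Hf : f \is a GRing.unit) :
  let L : {poly K} := \sum_(i < n.+1) ('C(n, i)%:R * a i) *: 'X^(n - i) in
  let u : K := f^-1 * D f in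
  oremul D (oremul D (f^-1)%:P L) f%:P =
    \sum_(k < n.+1)
      ('C(n, k)%:R *
        (\sum_(j < k.+1) 'C(k, j)%:R * (f^-1 * a (k - j)%N * f) * bellP D j u))
      *: 'X^(n - k).
Proof.
move=> L u.
have Hf0 : f^-1 != 0.
  rewrite invr_eq0; apply/negP => /eqP H; move: Hf; rewrite H.
  by rewrite unitr0.
have -> : oremul D (f^-1)%:P L = f^-1 *: L.
  by rewrite /oremul size_polyC Hf0 big_ord1 coefC /=.
have HL : L = \poly_(j < n.+1) ('C(n, n - j)%:R * a (n - j)%N).
  by rewrite /L (@rev_poly _ n (fun i => 'C(n, i)%:R * a i)).
rewrite /oremul (@widen_sum _ _ n.+1); last first.
  by apply: leq_trans (size_scale_leq _ _) _; rewrite HL size_poly.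
rewrite (@rev_poly _ n (fun k => 'C(n, k)%:R * (\sum_(j < k.+1) 'C(k, j)%:R * (f^-1 * a (k - j)%N * f) * bellP D j u))); apply/polyP => i.
rewrite coef_sum coef_poly.
under eq_bigr do rewrite coefZ iterDmulC // coefZ HL coef_poly ltn_ord.
case: ltnP => Hi; last first.
  rewrite big1 // => j _; case: ifP; last by rewrite mulr0.
  by move=> Hij; have := leq_trans Hij (ltn_ord j); rewrite leqNgt Hi.
have [k Hk] : exists k, n = (i + k)%N by exists (n - i)%N; rewrite subnKC.
rewrite Hk -addnS big_split_ord /= big1 ?add0r; last first.
  by move=> j _; rewrite leqNgt ltn_ord mulr0.
rewrite addKn mulr_sumr; apply: eq_bigr => t _.
rewrite leq_addr subnDl addKn /u bellE //.
have Htk : (t <= k)%N by rewrite -ltnS ltn_ord.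
rewrite !mulr_natl !(mulrnAr, mulrnAl) -!mulrnA !mulrA mulrK //.
by rewrite binid // mulnC.
Qed.
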